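(* Let $p,q$ be consecutive patterns of length 4 satisfying the standing assumptions below. Let $n\ge1$, $S,U\subseteq[n]$, and let $\epsilon\in I_n$ with $\operatorname{Em}(q,\epsilon)=S$ and $\operatorname{Em}(p,\epsilon)=U$. Then $\operatorname{Em}(p,\phi^{-1}_{\ge S}(\epsilon))\subseteq S\cup U$.
   Context: An inversion sequence of length $n$ is an integer sequence $\epsilon_1\cdots\epsilon_n$ with $0\le\epsilon_i<i$; $I_n$ is the set of them. The reduction of an integer word replaces each occurrence of its $k$-th smallest distinct value by $k-1$. A consecutive pattern $p=\underline{p_1p_2p_3p_4}$ occurs in $\epsilon$ at position $i$ if the reduction of $\epsilon_i\epsilon_{i+1}\epsilon_{i+2}\epsilon_{i+3}$ is $p_1p_2p_3p_4$; $\operatorname{Em}(p,\epsilon)$ is the set of such $i$. A pattern is non-overlapping if no two of its occurrences in any sequence overlap in more than one entry (i.e. no two occurrences are at positions differing by 1 or 2). Standing assumptions: $p$ and $q$ are each non-overlapping, agree in their first entries and in their last entries, have the same maximum entry $d$, and each contains every value in $\{0,\dots,d\}$. Change operation: if $p$ occurs in $\epsilon$ at $i$, let $f$ be the order-preserving bijection from $\{0,\dots,d\}$ onto the set of values $\{\epsilon_i,\dots,\epsilon_{i+3}\}$, so that $\epsilon_{i+j-1}=f(p_j)$; changing this occurrence to $q$ means replacing $\epsilon_{i+j-1}$ by $f(q_j)$ for $j=1,\dots,4$ (and symmetrically for changing an occurrence of $q$ to $p$). It is assumed that $p$ and $q$ are interchangeable, i.e. such changes (in either direction) applied to an inversion sequence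 always yield an inversion sequence. For $T\subseteq[n]$, let $I_{n,p}(\supseteq T)=\{\epsilon\in I_n:\operatorname{Em}(p,\epsilon)\supseteq T\}$ and similarly for $q$; $\phi_{\ge T}:I_{n,p}(\supseteq T)\to I_{n,q}(\supseteq T)$ changes the occurrences of $p$ at all positions in $T$ to occurrences of $q$, and it is assumed to be a bijection whose inverse $\phi^{-1}_{\ge T}$ changes the occurrences of $q$ at all positions in $T$ to occurrences of $p$. *)

(* Defs.v *)
From mathcomp Require Import all_boot.
Set Implicit Arguments. Unset Strict Implicit. Unset Printing Implicit Defensive.

(* Words/sequences are seq nat; positions are 1-based as in the paper. *)

Definition inv_seq (n : nat) (e : seq nat) : Prop :=
  size e = n /\ forall k, k < n -> nth 0 e k < k.+1.

(* reduction: each occurrence of the k-th smallest distinct value becomes k-1,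
   i.e. x is replaced by the number of distinct values of w below x *)
Definition red (w : seq nat) : seq nat :=
  [seq size (undup [seq y <- w | y < x]) | x <- w].

Definition window (w : seq nat) (i : nat) : seq nat := take 4 (drop i.-1 w).

Definition occurs (p w : seq nat) (i : nat) : bool :=
  [&& 1 <= i, i + 3 <= size w & red (window w i) == p].

Definition Em (p w : seq nat) : pred nat := occurs p w.

Definition pmax (p : seq nat) : nat := \max_(x <- p) x.

Definition non_overlapping (p : seq nat) : Prop :=
  forall (w : seq nat) (i j : nat), occurs p w i -> occurs p w j -> i < j -> 3 <= j - i.

(* change an occurrence of p at position i into q: f is the order-preserving
   bijection {0..d} -> set of values of the window, f r = (r+1)-th smallest value *)
Definition change (p q : seq nat) (i : nat) (w : seq nat) : seq nat :=
  if occurs p w i then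
    let vals := sort leq (undup (window w i)) in
    take i.-1 w ++ [seq nth 0 vals r | r <- q] ++ drop (i + 3) w
  else w.

(* phi_{>=T}: change the occurrences of p at all positions of T (within 1..size w)
   into occurrences of q (performed successively, in increasing order of position) *)
Definition change_all (p q : seq nat) (T : pred nat) (w : seq nat) : seq nat :=
  foldl (fun w' i => change p q i w') w [seq i <- iota 1 (size w) | T i].

Definition standing (p q : seq nat) : Prop :=
  [/\ size p = 4 /\ size q = 4,
      non_overlapping p /\ non_overlapping q,
      head 0 p = head 0 q /\ last 0 p = last 0 q,
      pmax p = pmax q /\
      (forall v, v <= pmax p -> v \in p) /\ (forall v, v <= pmax q -> v \in q) &
      (forall n e i, inv_seq n e -> occurs p e i -> inv_seq n (change p q i e)) /\
      (forall n e i, inv_seq n e -> occurs q e i -> inv_seq n (change q p i e))].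

(* phi_{>=T} : I_{n,p}(⊇T) -> I_{n,q}(⊇T) is a bijection with inverse phi^{-1}_{>=T} *)
Definition phi_bijective (p q : seq nat) : Prop :=
  forall (n : nat) (T : pred nat), (forall i, T i -> 1 <= i <= n) ->
    (forall e, inv_seq n e -> {subset T <= Em p e} ->
       [/\ inv_seq n (change_all p q T e), {subset T <= Em q (change_all p q T e)}
         & change_all q p T (change_all p q T e) = e]) /\
    (forall e, inv_seq n e -> {subset T <= Em q e} ->
       [/\ inv_seq n (change_all q p T e), {subset T <= Em p (change_all q p T e)}
         & change_all p q T (change_all q p T e) = e]).

(* Main.v *)
Require Import Defs.
From mathcomp Require Import all_boot zify.

Lemma rank_nth (s : seq nat) a : sorted ltn s -> a \in s ->
  nth 0 s (count (fun y => y < a) s) = a.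
Proof.
elim: s => [|h t IH] //= Hs Ha.
have Ht : sorted ltn t := path_sorted Hs.
have Hall : all (ltn h) t := order_path_min ltn_trans Hs.
case: (ltnP h a) => Hha /=.
  apply: IH => //.
  by move: Ha; rewrite inE => /orP [/eqP E|//]; rewrite E ltnn in Hha.
move: Ha; rewrite inE => /orP [/eqP E|Ha].
  subst a. rewrite add0n.
  have -> : count (fun y => y < h) t = 0.
    rewrite (@eq_in_count _ _ pred0); first by rewrite count_pred0.
    move=> y Hy /=. have := allP Hall y Hy => /= Hy'. apply/negbTE. rewrite -leqNgt. exact: ltnW.
  by [].
have := allP Hall a Ha => /= H. exfalso. lia.
Qed.

Lemma vals_rank x a : a \in x ->
  nth 0 (sort leq (undup x)) (size (undup [seq y <- x | y < a])) = a.
Proof.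
move=> Ha.
have Hp : perm_eq (sort leq (undup x)) (undup x) by rewrite perm_sort.
rewrite -filter_undup size_filter -((permP Hp) _).

apply: rank_nth.
  rewrite ltn_sorted_uniq_leq (perm_uniq Hp) undup_uniq /=.
  exact: sort_sorted leq_total _.
by rewrite (perm_mem Hp) mem_undup.
Qed.

Lemma window_nth w i m : m < 4 -> nth 0 (window w i) m = nth 0 w (i.-1 + m).
Proof. by move=> Hm; rewrite /window nth_take // nth_drop. Qed.

Lemma size_window w i : i + 3 <= size w -> 1 <= i -> size (window w i) = 4.
Proof. move=> H1 H2; rewrite /window size_takel // size_drop; lia. Qed.

Lemma change_size (P Q : seq nat) i w : size P = 4 -> size (change Q P i w) = size w.
Proof.
move=> HP; rewrite /change; case: ifP => // /and3P [Hi Hs _].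
rewrite !size_cat size_map size_takel ?size_drop; lia.
Qed.

Lemma change_nth (P Q : seq nat) i w k : size P = 4 ->
  head 0 P = head 0 Q -> last 0 P = last 0 Q -> k != i -> k != i.+1 ->
  nth 0 (change Q P i w) k = nth 0 w k.
Proof.
move=> HP Hh Hl Hk1 Hk2; rewrite /change; case: ifP => // /and3P [Hi Hs /eqP Hr].
set x := window w i.
have Hx : size x = 4 by apply: size_window.
have key : forall m, m < 4 -> nth 0 P m = nth 0 Q m ->
    nth 0 [seq nth 0 (sort leq (undup x)) r | r <- P] m = nth 0 w (i.-1 + m).
  move=> m Hm E. rewrite (nth_map 0) ?HP // E -Hr /red (nth_map 0) ?Hx //.
  rewrite vals_rank; first exact: window_nth.
  by apply: mem_nth; rewrite Hx.
rewrite nth_cat size_takel; last lia.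
case: ltnP => H1; first by rewrite nth_take.
rewrite nth_cat size_map HP.
case: ltnP => H2.
  have [E|E] : k - i.-1 = 0 \/ k - i.-1 = 3 by move: Hk1 Hk2; lia.
  - rewrite E key //; first (congr nth; lia).
  - rewrite E key //; first (congr nth; lia).
    have HQ : size Q = 4 by rewrite -Hr /red size_map.
    clear key Hr Hh; move: HP HQ Hl.
    case: P => [|a0 [|a1 [|a2 [|a3 [|? ?]]]]] //; case: Q => [|b0 [|b1 [|b2 [|b3 [|? ?]]]]] //.
rewrite nth_drop; congr nth; lia.
Qed.

Lemma foldl_change (P Q : seq nat) (l : seq nat) w k : size P = 4 ->
  head 0 P = head 0 Q -> last 0 P = last 0 Q ->
  (forall j, j \in l -> (k != j) && (k != j.+1)) ->
  nth 0 (foldl (fun w' i => change Q P i w') w l) k = nth 0 w k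
  /\ size (foldl (fun w' i => change Q P i w') w l) = size w.
Proof.
move=> HP Hh Hl; elim: l w => [|j l IH] w //= Hj.
have [A B] := IH (change Q P j w) (fun j' H => Hj j' (@mem_behead _ (j :: l) j' H)).
have /andP [H1 H2] := Hj j (mem_head _ _).
by rewrite A B change_nth // change_size.
Qed.

Lemma foldl_size (P Q : seq nat) (l : seq nat) w : size P = 4 ->
  size (foldl (fun w' i => change Q P i w') w l) = size w.
Proof. by move=> HP; elim: l w => [|j l IH] w //=; rewrite IH change_size. Qed.

Theorem lemma1 (p q : seq nat) (n : nat) (S U : pred nat) (e : seq nat) :
  standing p q -> phi_bijective p q ->
  1 <= n ->
  (forall i, S i -> 1 <= i <= n) -> (forall i, U i -> 1 <= i <= n) ->
  inv_seq n e ->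
  Em q e =1 S -> Em p e =1 U ->
  forall i, Em p (change_all q p S e) i -> S i || U i.
Proof.
move=> [[HP HQ] [NOp NOq] [Hh Hl] _ _] Hphi Hn HS HU He EmS EmU i Hi.
case HSi: (S i) => //=.
have [_ Hsub _] := (Hphi n S HS).2 e He (fun j Hj => etrans (EmS j) Hj).
set e' := change_all q p S e in Hi Hsub.
have Hnth : forall k, (forall j, S j -> (k != j) && (k != j.+1)) ->
    nth 0 e' k = nth 0 e k /\ size e' = size e.
  move=> k Hk; apply: foldl_change => // j.
  by rewrite mem_filter => /andP [Sj _]; apply: Hk.
have Hsz : size e' = size e by apply: foldl_size.
rewrite -EmU.
move: (Hi); rewrite /Em /occurs => /and3P [Hi1 Hi2 /eqP Hr].
have Hw : window e' i = window e i.
  apply: (@eq_from_nth _ 0); first by rewrite /window !size_take !size_drop Hsz.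
  move=> m; rewrite /window size_take size_drop Hsz => Hm.
  have Hm4 : m < 4.
    move: Hm; case: ifP => C H; lia.
  rewrite !nth_take // !nth_drop; apply: (Hnth _ _).1 => j Sj.
  have Hoc := Hsub j Sj.
  have Hij : i != j by apply/eqP => E; subst j; rewrite Sj in HSi.
  case: (ltngtP i j) => Hc.
  - have := NOp _ _ _ Hi Hoc Hc; lia.
  - have := NOp _ _ _ Hoc Hi Hc; lia.
  - by rewrite Hc eqxx in Hij.
by rewrite /Em /occurs Hi1 -Hsz Hi2 -Hw Hr eqxx.
Qed.
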